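(* Let $n\ge2$ and let $f:\{0,1\}^{n-1}\to\{0,1\}$ be a monotone Boolean function (i.e. $x\le y$ coordinatewise implies $f(x)\le f(y)$). Define the orientation $\Phi_f$ of the $n$-cube by: for $i\ne n$, $v\to v\oplus i$ iff $v_i=0$; and $v\to v\oplus n$ iff $v_n+f(v')=1$, where $v'\in\{0,1\}^{n-1}$ consists of the first $n-1$ coordinates of $v$. Then $\Phi_f$ is an acyclic, locally uniform, strongly Holt--Klee unique-sink orientation, and distinct monotone functions $f$ give distinct orientations $\Phi_f$.
   Context: For $v\in\{0,1\}^n$ and $I\subseteq[n]$, $v\oplus I$ is obtained from $v$ by flipping the coordinates in $I$; $v\oplus i:=v\oplus\{i\}$. The $n$-cube has vertex set $\{0,1\}^n$ and edges $\{v,v\oplus i\}$. A subcube is the induced subgraph on a vertex set $\{v\oplus I: I\subseteq C\}$ for some vertex $v$ and $C\subseteq[n]$; its dimension is $|C|$. A unique-sink orientation (USO) is an orientation of the $n$-cube in which every subcube has exactly one sink; then every subcube also has a unique source. For an orientation $\Phi$ and $F\subseteq[n]$, $\Phi^{(F)}$ is obtained by reversing all edges $\{v,v\oplus i\}$ with $i\in F$. A USO is Holt--Klee if in every subcube of dimension $d$ there are $d$ directed paths from the subcube's source to its sink, pairwise sharing no vertex other than source and sink. A USO $\Phi$ is strongly Holt--Klee if $\Phi^{(F)}$ is Holt--Klee for every $F\subseteq[n]$. A USO is locally uniform if (i) whenever $u_i=u_j=0$, $u\to u\oplus i$ and $u\to u\oplus j$, then $u\oplus i\to u\oplus\{i,j\}$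 and $u\oplus j\to u\oplus\{i,j\}$; and (ii) whenever $u_i=u_j=0$, $u\oplus i\to u$ and $u\oplus j\to u$, then $u\oplus\{i,j\}\to u\oplus i$ and $u\oplus\{i,j\}\to u\oplus j$. Acyclic means no directed cycle. *)

(* Defs.v *)
From mathcomp Require Import all_boot.
Set Implicit Arguments. Unset Strict Implicit. Unset Printing Implicit Defensive.

Definition vert (n : nat) := {ffun 'I_n -> bool}.

Definition flipS n (v : vert n) (I : {set 'I_n}) : vert n :=
  [ffun j => if j \in I then ~~ v j else v j].
Definition flip n (v : vert n) (i : 'I_n) : vert n := flipS v [set i].

(* An orientation is encoded by o : vert n -> 'I_n -> bool, where
   o v i = true means the edge {v, v (+) i} is directed v -> v (+) i.
   Consistency: each edge gets exactly one direction. *)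
Definition orientation n := vert n -> 'I_n -> bool.
Definition is_orientation n (o : orientation n) : Prop :=
  forall v i, o (flip v i) i = ~~ o v i.

Definition subcube n (v : vert n) (C : {set 'I_n}) : {set vert n} :=
  [set flipS v I | I in powerset C].

Definition is_sink n (o : orientation n) (v : vert n) C (u : vert n) : bool :=
  (u \in subcube v C) && [forall i in C, ~~ o u i].
Definition is_source n (o : orientation n) (v : vert n) C (u : vert n) : bool :=
  (u \in subcube v C) && [forall i in C, o u i].

Definition is_USO n (o : orientation n) : Prop :=
  is_orientation o /\
  forall (v : vert n) (C : {set 'I_n}), #|[set u | is_sink o v C u]| = 1.

Definition dedge n (o : orientation n) (C : {set 'I_n}) : rel (vert n) :=
  fun u w => [exists i in C, (w == flip u i) && o u i].

(* A directed (simple) path s = x_0 -> x_1 -> ... -> x_k = t inside the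
   subcube with direction set C, given by its tail [x_1; ...; x_k]. *)
Definition dpath n (o : orientation n) C (s t : vert n) (q : seq (vert n)) : bool :=
  [&& path (dedge o C) s q, last s q == t & uniq (s :: q)].

Definition holt_klee n (o : orientation n) : Prop :=
  forall (v : vert n) (C : {set 'I_n}) (s t : vert n),
    is_source o v C s -> is_sink o v C t ->
    exists ps : seq (seq (vert n)),
      [/\ size ps = #|C|, uniq ps,
          forall q, q \in ps -> dpath o C s t q &
          forall a b : nat, a < b < size ps ->
            forall x, x \in s :: nth [::] ps a -> x \in s :: nth [::] ps b ->
              x = s \/ x = t].

Definition reorient n (o : orientation n) (F : {set 'I_n}) : orientation n :=
  fun v i => if i \in F then ~~ o v i else o v i.

Definition strongly_holt_klee n (o : orientation n) : Prop :=
  forall F : {set 'I_n}, holt_klee (reorient o F).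

Definition locally_uniform n (o : orientation n) : Prop :=
  forall (u : vert n) (i j : 'I_n), i != j -> u i = false -> u j = false ->
    (o u i -> o u j -> o (flip u i) j /\ o (flip u j) i) /\
    (o (flip u i) i -> o (flip u j) j ->
       o (flip (flip u i) j) j /\ o (flip (flip u j) i) i).

Definition acyclic n (o : orientation n) : Prop :=
  forall (u : vert n) (p : seq (vert n)),
    path (dedge o setT) u p -> last u p = u -> p = [::].

Definition monotone m (f : {ffun 'I_m -> bool} -> bool) : Prop :=
  forall x y : {ffun 'I_m -> bool}, (forall i, x i <= y i) -> f x <= f y.

(* The n-cube with n = m.+1; coordinate n is ord_max, v' = first m coords. *)
Definition vprefix m (v : vert m.+1) : {ffun 'I_m -> bool} :=
  [ffun i : 'I_m => v (widen_ord (leqnSn m) i)].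

Definition Phi m (f : {ffun 'I_m -> bool} -> bool) : orientation m.+1 :=
  fun v i => if i == ord_max then (v ord_max (+) f (vprefix v)) else ~~ v i.

(* Main.v *)
From Stdlib Require Import Lia.
Require Import Defs.
From mathcomp Require Import all_boot.
Set Implicit Arguments. Unset Strict Implicit. Unset Printing Implicit Defensive.

Definition cmem (d k j e : nat) : bool := ((k <= e) && (e < Nat.add k j)) || (e < Nat.sub (Nat.add k j) d).
Definition memQ d k j e : Prop := ((k <= e /\ e < Nat.add k j) \/ e < Nat.sub (Nat.add k j) d)%coq_nat.
Lemma memP d k j e : cmem d k j e = true <-> memQ d k j e.
Proof. rewrite /cmem /memQ; split.
- case/orP => [/andP [/leP H1 /ltP H2]|/ltP H]; lia.
- case => [[/leP H1 /ltP H2]|/ltP H]; rewrite ?H1 ?H2 ?H ?orbT //.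
Qed.
Lemma memR d k j e : reflect (memQ d k j e) (cmem d k j e).
Proof. by apply: (iffP idP) => /memP. Qed.

Definition pos d k j := if k + j < d then k + j else k + j - d.

Lemma pos_lt d k j : k < d -> j < d -> pos d k j < d.
Proof. rewrite /pos -!plusE -!minusE => /ltP h1 /ltP h2; case: (@ltP (Nat.add k j) d) => h3; apply/ltP; lia. Qed.

Lemma mem_step d k j e : k < d -> j < d -> e < d ->
  cmem d k j.+1 e = cmem d k j e || (e == pos d k j).
Proof.
rewrite /pos -!plusE -!minusE => /ltP h1 /ltP h2 /ltP h3.
case: (@ltP (Nat.add k j) d) => H4;
case: (memR d k j.+1 e) => H1; case: (memR d k j e) => H2; case: eqP => H3 //=;
  rewrite /memQ in H1 H2; lia.
Qed.

Lemma mem0 d k e : k <= d -> cmem d k 0 e = false.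
Proof. move=> /leP h; apply/negbTE/negP => /memR; rewrite /memQ; lia. Qed.

Lemma memd d k e : k < d -> e < d -> cmem d k d e.
Proof. move=> /ltP h /ltP h'; apply/memR; rewrite /memQ; lia. Qed.

Lemma mem1 d k e : k < d -> e < d -> cmem d k 1 e = (e == k).
Proof. move=> /ltP h /ltP h'; case: (memR d k 1 e) => H; case: eqP => H' //; rewrite /memQ in H; lia. Qed.

Lemma memdm1 d k e : 0 < k -> k < d -> e < d -> cmem d k d.-1 e = (e != k.-1).
Proof.
move=> /ltP h0 /ltP h /ltP h'; case: (memR d k d.-1 e) => H; case: eqP => H' //=;
  rewrite /memQ in H; rewrite -?subn1 -?minusE in H H'; lia.
Qed.

Lemma mem_class d k k' j j' : k < d -> k' < d -> j <= d -> j' <= d ->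
  (forall e, e < d -> cmem d k j e = cmem d k' j' e) ->
  j = j' /\ (j = 0 \/ j = d \/ k = k').
Proof.
move=> /ltP hk /ltP hk' /leP hj /leP hj' H.
have H' : forall e, (e < d)%coq_nat -> (memQ d k j e <-> memQ d k' j' e).
  move=> e /ltP he; rewrite -!memP H //.
rewrite /memQ in H'.
have i1 := H' k ltac:(lia).
have i2 := H' k' ltac:(lia).
have [e3 [he3 ee3]] : exists e, (e < d /\ (k = 0 -> e = Nat.sub d 1) /\ (k <> 0 -> e = Nat.sub k 1))%coq_nat.
  destruct k; [exists (Nat.sub d 1)|exists k]; lia.
have [e5 [he5 ee5]] : exists e, (e < d /\ ((Nat.add k j < d) -> e = Nat.add k j) /\ (~ (Nat.add k j < d) -> e = Nat.sub (Nat.add k j) d))%coq_nat.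
  destruct (Compare_dec.lt_dec (Nat.add k j) d); [exists (Nat.add k j)|exists (Nat.sub (Nat.add k j) d)]; lia.
have [e6 [he6 ee6]] : exists e, (e < d /\ ((Nat.add k' j' < d) -> e = Nat.add k' j') /\ (~ (Nat.add k' j' < d) -> e = Nat.sub (Nat.add k' j') d))%coq_nat.
  destruct (Compare_dec.lt_dec (Nat.add k' j') d); [exists (Nat.add k' j')|exists (Nat.sub (Nat.add k' j') d)]; lia.
destruct (PeanoNat.Nat.eq_dec j 0) as [j0|j0].
  subst j; split; [|by left]. clear -i2 hk hk'. lia.
destruct (PeanoNat.Nat.eq_dec j' 0) as [j0'|j0'].
  subst j'. clear -i1 hk hk' j0. lia.
destruct (PeanoNat.Nat.eq_dec j d) as [jd|jd].
  subst j. have i6 := H' e6 he6. clear -i6 hk hk' ee6 hj'. split; [|by right;left]. lia.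
destruct (PeanoNat.Nat.eq_dec j' d) as [jd'|jd'].
  subst j'. have i5 := H' e5 he5. clear -i5 hk hk' ee5 hj jd. lia.
have kk : k = k'.
  have i3 := H' e3 he3. clear -i1 i3 ee3 hk hk' hj hj' j0 j0' jd jd'. lia.
subst k'. split; [|by right;right].
have i5 := H' e5 he5. have i6 := H' e6 he6. clear -i5 i6 ee5 ee6 hk hj hj' j0 j0' jd jd'. lia.
Qed.


Lemma flipE n (u : vert n) i j : flip u i j = (if j == i then ~~ u j else u j).
Proof. by rewrite /flip /flipS ffunE in_set1. Qed.

Lemma widen_neq m (i : 'I_m) : widen_ord (leqnSn m) i != ord_max.
Proof. by rewrite -val_eqE /= neq_ltn ltn_ord. Qed.

Lemma vprefix_flipN m (v : vert m.+1) : vprefix (flip v ord_max) = vprefix v.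
Proof. by apply/ffunP => i; rewrite !ffunE ?in_set1 (negbTE (widen_neq i)). Qed.

Lemma Phi_orient m f : is_orientation (@Phi m f).
Proof.
move=> v i; rewrite /Phi; case: eqP => [->|_].
  by rewrite vprefix_flipN flipE eqxx addNb.
by rewrite flipE eqxx.
Qed.

Lemma subcubeP n (v u : vert n) (C : {set 'I_n}) :
  reflect (forall i, i \notin C -> u i = v i) (u \in subcube v C).
Proof.
apply: (iffP imsetP) => [[I]|H].
  rewrite powersetE => sIC -> i iC; rewrite /flipS ffunE; case: ifP => // iI.
  by move: iC; rewrite (subsetP sIC i iI).
exists [set i | u i != v i].
  rewrite powersetE; apply/subsetP => i; rewrite inE; apply: contraR => iC.
  by rewrite H ?eqxx.
apply/ffunP => i; rewrite /flipS ffunE inE; by case: (u i); case: (v i).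
Qed.

Lemma Phi_USO m f : is_USO (@Phi m f).
Proof.
split; first exact: Phi_orient.
move=> v C.
pose w : vert m.+1 := [ffun i => if (i \in C) && (i != ord_max) then true else v i].
pose u0 : vert m.+1 := [ffun i => if (i == ord_max) && (ord_max \in C) then f (vprefix w) else w i].
have pw : vprefix u0 = vprefix w.
  by apply/ffunP => i; rewrite !ffunE (negbTE (widen_neq i)).
suff -> : [set u | is_sink (Phi f) v C u] = [set u0] by rewrite cards1.
apply/setP => u; rewrite !inE /is_sink; apply/idP/eqP.
- case/andP => /subcubeP Hsub /forallP Hs.
  have Hc : forall i, i \in C -> i != ord_max -> u i = true.
    by move=> i iC iN; move: (Hs i); rewrite iC /Phi (negbTE iN) /= negbK.
  have pu : vprefix u = vprefix w.
    apply/ffunP => i; rewrite !ffunE (widen_neq i) andbT.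
    case: ifP => [iC|/negbT iC]; [exact: Hc (widen_neq i)| exact: Hsub].
  apply/ffunP => i; rewrite ffunE; case: (boolP (i == ord_max)) => [/eqP -> |iN] /=.
    case: (boolP (ord_max \in C)) => NC /=.
      by move: (Hs ord_max); rewrite NC /Phi eqxx /= pu; case: (u _); case: (f _).
    by rewrite ffunE (negbTE NC) /=; apply: Hsub.
  rewrite ffunE iN andbT; case: ifP => [iC|/negbT iC]; [exact: Hc| exact: Hsub].
- move=> ->; apply/andP; split.
    apply/subcubeP => i iC; rewrite !ffunE (negbTE iC) /=.
    have -> : (i == ord_max) && (ord_max \in C) = false.
      by apply/negbTE; apply: contra iC => /andP [/eqP ->].
    by [].
  apply/forallP => i; apply/implyP => iC; rewrite /Phi.
  case: (boolP (i == ord_max)) => [/eqP ei|iN].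
    subst i; by rewrite pw ffunE eqxx iC /= addbb.
  by rewrite negbK ffunE (negbTE iN) /= ffunE iC iN.
Qed.

Definition pot m (f : {ffun 'I_m -> bool} -> bool) (u : vert m.+1) : nat :=
  (#|[set j | (j != ord_max) && u j]|).*2 + (u ord_max == f (vprefix u)).

Lemma pot_lt m f (u : vert m.+1) i : Phi f u i -> pot f u < pot f (flip u i).
Proof.
rewrite /Phi /pot; case: (boolP (i == ord_max)) => [/eqP ->|iN] H.
  have -> : [set j | (j != ord_max) && flip u ord_max j] = [set j | (j != ord_max) && u j].
    by apply/setP => j; rewrite !inE flipE; case: eqP.
  rewrite vprefix_flipN flipE eqxx ltn_add2l.
  by move: H; case: (u _); case: (f _).
have -> : [set j | (j != ord_max) && flip u i j] = i |: [set j | (j != ord_max) && u j].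
  apply/setP => j; rewrite !inE flipE; case: (boolP (j == i)) => [/eqP ->|] //=.
  by rewrite iN.
rewrite cardsU1 inE iN /= (negbTE H) /= doubleS.
set X := #|_|. set b1 := (_ == _). set b2 := (_ == _).
have : b1 <= 1 by case: b1.
idtac. move: b1 b2 => [] [] _ /=; rewrite -!plusE; apply/ltP; lia.
Qed.

Lemma Phi_acyclic m f : acyclic (@Phi m f).
Proof.
have key : forall (u : vert m.+1) p, path (dedge (Phi f) setT) u p -> p != [::] ->
    pot f u < pot f (last u p).
  move=> u p; elim: p u => [|x p IH] u //= /andP [/existsP [i /andP [_ /andP [/eqP -> H]]] Hp] _.
  have h1 := pot_lt H.
  case: p IH Hp => [|y p] IH Hp //=.
  by apply: (ltn_trans h1); apply: IH.
move=> u p Hp Hl; apply/eqP; apply: contraT => hp.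
by move: (key u p Hp hp); rewrite Hl ltnn.
Qed.

Lemma Phi_LU m f : monotone f -> locally_uniform (@Phi m f).
Proof.
move=> Hf u i j ij ui uj.
have monoj : forall k, k != ord_max -> u k = false -> f (vprefix u) -> f (vprefix (flip u k)).
  move=> k kN uk fu; have : f (vprefix u) <= f (vprefix (flip u k)).
    apply: Hf => l; rewrite !ffunE ?in_set1; case: eqP => [->|]; by rewrite ?uk.
  by rewrite fu; case: (f _).
split.
- rewrite /Phi; case: (boolP (i == ord_max)) => [/eqP ei|iN];
  case: (boolP (j == ord_max)) => [/eqP ej|jN].
  + by move: ij; rewrite ei ej; case/negP.
  + subst i; have e1 : (ord_max == j) = false by rewrite eq_sym (negbTE jN).
    rewrite !flipE e1 (negbTE jN) ui uj /= => fu _; split; first by [].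
    by apply: monoj.
  + subst j; have e1 : (ord_max == i) = false by rewrite eq_sym (negbTE iN).
    rewrite !flipE e1 (negbTE iN) ui uj /= => _ fu; split; last by [].
    by apply: monoj.
  + have e1 := negbTE ij; have e2 : (j == i) = false by rewrite eq_sym.
    by rewrite !flipE e1 e2 ui uj.
- rewrite /Phi; case: (boolP (i == ord_max)) => [/eqP ei|iN];
  case: (boolP (j == ord_max)) => [/eqP ej|jN].
  + by move: ij; rewrite ei ej; case/negP.
  + by rewrite !flipE eqxx uj.
  + by rewrite !flipE eqxx ui.
  + by rewrite !flipE eqxx ui.
Qed.

Lemma Phi_distinct m (f g : {ffun 'I_m -> bool} -> bool) :
  (exists x, f x != g x) -> exists v i, Phi f v i != Phi g v i.
Proof.
case=> x Hx.
pose v : vert m.+1 := [ffun i : 'I_m.+1 => if insub (val i) is Some j then x j else false].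
have pv : vprefix v = x.
  apply/ffunP => i; rewrite !ffunE /= insubT //= => H.
  by congr (x _); apply: val_inj.
exists v, ord_max; rewrite /Phi eqxx pv ffunE /= insubF ?ltnn //.
Qed.


Lemma mem_pos d k j : k < d -> j < d -> cmem d k j (pos d k j) = false.
Proof.
rewrite /pos -!plusE -!minusE => /ltP h1 /ltP h2.
case: (@ltP (Nat.add k j) d) => H4; apply/negbTE/negP => /memR; rewrite /memQ; lia.
Qed.

Definition Lab m (s : vert m.+1) (cs : seq 'I_m.+1) (b : bool) (k j : nat) : vert m.+1 :=
  [ffun x => if x == ord_max then s ord_max (+) b
             else if (x \in cs) && cmem (size cs) k j (index x cs) then ~~ s x else s x].

Lemma Lab0 m (s : vert m.+1) (cs : seq 'I_m.+1) k : k <= size cs -> @Lab m s cs false k 0 = s.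
Proof.
move=> hk; apply/ffunP => x; rewrite ffunE mem0 // andbF.
by case: eqP => [->|]; rewrite ?addbF.
Qed.

Lemma Lab_flipN m (s : vert m.+1) (cs : seq 'I_m.+1) b k j : flip (@Lab m s cs b k j) ord_max = Lab s cs (~~ b) k j.
Proof.
apply/ffunP => x; rewrite flipE; case: (eqVneq x ord_max) => [->|xN].
  by rewrite !ffunE eqxx addbN.
by rewrite !ffunE (negbTE xN).
Qed.

Lemma Lab_top m (s : vert m.+1) (cs : seq 'I_m.+1) b k : k < size cs -> @Lab m s cs b k (size cs) =
  [ffun x => if x == ord_max then s ord_max (+) b else if x \in cs then ~~ s x else s x].
Proof.
move=> hk; apply/ffunP => x; rewrite !ffunE; case: (boolP (x \in cs)) => xc //=.
by rewrite memd // index_mem.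
Qed.

Lemma Lab_topk m (s : vert m.+1) (cs : seq 'I_m.+1) b k k' : k < size cs -> k' < size cs ->
  @Lab m s cs b k (size cs) = Lab s cs b k' (size cs).
Proof. by move=> h h'; rewrite !Lab_top. Qed.

Lemma Lab_nonN m (s : vert m.+1) (cs : seq 'I_m.+1) b b' k j x : x != ord_max -> @Lab m s cs b k j x = Lab s cs b' k j x.
Proof. by move=> xN; rewrite !ffunE (negbTE xN). Qed.

Lemma vprefix_Lab m (s : vert m.+1) (cs : seq 'I_m.+1) b b' k j : vprefix (@Lab m s cs b k j) = vprefix (Lab s cs b' k j).
Proof. apply/ffunP => i; rewrite [LHS]ffunE [RHS]ffunE; exact: Lab_nonN (widen_neq i). Qed.

Lemma Lab_eq m (s : vert m.+1) (cs : seq 'I_m.+1) b k j b' k' j' : uniq cs -> ord_max \notin cs ->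
  k < size cs -> k' < size cs -> j <= size cs -> j' <= size cs ->
  @Lab m s cs b k j = Lab s cs b' k' j' ->
  [/\ b = b', j = j' & (j = 0 \/ j = size cs \/ k = k')].
Proof.
move=> Hu HN hk hk' hj hj' E.
have eb : b = b'.
  by move: (congr1 (fun u : vert m.+1 => u ord_max) E); rewrite !ffunE eqxx; case: (s _) => /= h; [apply: negb_inj|]; exact: h.
have H : forall e, e < size cs -> cmem (size cs) k j e = cmem (size cs) k' j' e.
  move=> e he; set x := nth ord_max cs e.
  have xc : x \in cs := mem_nth _ he.
  have xN : x != ord_max by apply: contraNneq HN => <-.
  have ix : index x cs = e := index_uniq _ he Hu.
  move: (congr1 (fun u : vert m.+1 => u x) E); rewrite !ffunE (negbTE xN) xc ix /=.
  by case: (cmem _ _ _ e); case: (cmem _ _ _ e) => //=; case: (s x).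
by have [ej h] := mem_class hk hk' hj hj' H.
Qed.

Lemma Lab_step m (s : vert m.+1) (cs : seq 'I_m.+1) b k j : uniq cs -> ord_max \notin cs -> k < size cs -> j < size cs ->
  let i := nth ord_max cs (pos (size cs) k j) in
  [/\ i \in cs, @Lab m s cs b k j i = s i & Lab s cs b k j.+1 = flip (Lab s cs b k j) i].
Proof.
move=> Hu HN hk hj i.
have hp := pos_lt hk hj.
have ic : i \in cs := mem_nth _ hp.
have iN : i != ord_max by apply: contraNneq HN => <-.
have ii : index i cs = pos (size cs) k j := index_uniq _ hp Hu.
split => //.
  by rewrite ffunE (negbTE iN) ic ii mem_pos.
apply/ffunP => x; rewrite flipE.
case: (eqVneq x i) => [->|xi].
  by rewrite !ffunE (negbTE iN) ic ii mem_pos // mem_step // ?eqxx ?orbT.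
rewrite !ffunE; case: eqP => // _; case: (boolP (x \in cs)) => xc //=.
rewrite mem_step ?index_mem //.
have -> : (index x cs == pos (size cs) k j) = false.
  apply/negbTE; apply: contra xi => /eqP E; by rewrite /i -E nth_index.
by rewrite orbF.
Qed.

Definition Ctx m (o : orientation m.+1) (C : {set 'I_m.+1}) (s : vert m.+1) (cs : seq 'I_m.+1) :=
  [/\ uniq cs, ord_max \notin cs, {subset cs <= C} & forall x u, x \in cs -> o u x = (u x == s x)].

Lemma dedge_step m (o : orientation m.+1) (C : {set 'I_m.+1}) (s : vert m.+1) (cs : seq 'I_m.+1) b k j : @Ctx m o C s cs ->
  k < size cs -> j < size cs -> dedge o C (Lab s cs b k j) (Lab s cs b k j.+1).
Proof.
move=> [Hu HN HC Ho] hk hj; have [ic iv ->] := @Lab_step _ s cs b k j Hu HN hk hj.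
apply/existsP; exists (nth ord_max cs (pos (size cs) k j)).
by rewrite HC //= eqxx /= Ho // iv eqxx.
Qed.

Lemma dedge_N m (o : orientation m.+1) (C : {set 'I_m.+1}) u : ord_max \in C -> o u ord_max ->
  dedge o C u (flip u ord_max).
Proof. by move=> NC H; apply/existsP; exists ord_max; rewrite NC eqxx H. Qed.

Lemma path_iota (T : Type) (e : rel T) (F : nat -> T) a n :
  (forall j, a <= j -> j < a + n -> e (F j) (F j.+1)) ->
  path e (F a) [seq F j | j <- iota a.+1 n].
Proof.
elim: n a => [|n IH] a H //=; apply/andP; split.
  by apply: H => //; rewrite addnS ltnS leq_addr.
apply: IH => j h1 h2; apply: H; first exact: ltnW.
by rewrite addnS -addSn.
Qed.

Lemma Lab_path m (o : orientation m.+1) (C : {set 'I_m.+1}) (s : vert m.+1) (cs : seq 'I_m.+1) b k a n : @Ctx m o C s cs -> k < size cs -> a + n <= size cs ->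
  path (dedge o C) (Lab s cs b k a) [seq Lab s cs b k j | j <- iota a.+1 n].
Proof.
move=> X hk han; apply: path_iota => j h1 h2; apply: dedge_step => //.
exact: leq_trans h2 _.
Qed.

Lemma in_map_iota (T : eqType) (F : nat -> T) a n x :
  x \in [seq F j | j <- iota a n] -> exists2 j, a <= j < a + n & x = F j.
Proof. by case/mapP => j; rewrite mem_iota => h ->; exists j. Qed.

Lemma last_iota a n x : last x (iota a n.+1) = a + n.
Proof. elim: n a x => [|n IH] a x; first by rewrite /= addn0. change (last a (iota a.+1 n.+1) = a + n.+1). by rewrite IH addSnnS. Qed.

Lemma uniq_Lab_iota m (s : vert m.+1) (cs : seq 'I_m.+1) b k a n : uniq cs -> ord_max \notin cs -> k < size cs ->
  a + n <= (size cs).+1 -> uniq [seq @Lab m s cs b k j | j <- iota a n].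
Proof.
move=> Hu HN hk han; rewrite map_inj_in_uniq ?iota_uniq // => j j'.
rewrite !mem_iota => /andP [_ h1] /andP [_ h2] E.
have h1' : j <= size cs by rewrite -ltnS; exact: leq_trans h1 han.
have h2' : j' <= size cs by rewrite -ltnS; exact: leq_trans h2 han.
by case: (Lab_eq Hu HN hk hk h1' h2' E).
Qed.


Lemma Lab_eqQ m (s : vert m.+1) (cs : seq 'I_m.+1) b k j b' k' j' : uniq cs -> ord_max \notin cs ->
  (k < size cs)%coq_nat -> (k' < size cs)%coq_nat -> (j <= size cs)%coq_nat -> (j' <= size cs)%coq_nat ->
  Lab s cs b k j = Lab s cs b' k' j' ->
  b = b' /\ j = j' /\ (j = 0 \/ j = size cs \/ k = k')%coq_nat.
Proof.
move=> Hu HN /ltP hk /ltP hk' /leP hj /leP hj' E.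
by case: (Lab_eq Hu HN hk hk' hj hj' E).
Qed.

Lemma last_map_iota (T : Type) (F : nat -> T) x a n :
  last x [seq F j | j <- iota a n.+1] = F (a + n).
Proof.
rewrite /= last_map; case: n => [|n]; first by rewrite addn0.
by rewrite last_iota addSnnS.
Qed.

Definition HKgoal m (o : orientation m.+1) (C : {set 'I_m.+1}) (s t : vert m.+1) : Prop :=
  exists ps : seq (seq (vert m.+1)),
      [/\ size ps = #|C|, uniq ps,
          forall q, q \in ps -> dpath o C s t q &
          forall a b : nat, a < b < size ps ->
            forall x, x \in s :: nth [::] ps a -> x \in s :: nth [::] ps b ->
              x = s \/ x = t].

Definition cyc m (s : vert m.+1) cs k := [seq Lab s cs false k j | j <- iota 1 (size cs)].

Lemma cyc_dpath m (o : orientation m.+1) (C : {set 'I_m.+1}) (s : vert m.+1) (cs : seq 'I_m.+1) t k : @Ctx m o C s cs -> k < size cs ->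
  t = Lab s cs false 0 (size cs) -> dpath o C s t (cyc s cs k).
Proof.
move=> X hk ->; have [Hu HN _ _] := X.
have s0 : s = Lab s cs false k 0 by rewrite Lab0 // ltnW.
have d0 : 0 < size cs by apply: leq_ltn_trans hk.
rewrite /dpath /cyc; apply/and3P; split.
- rewrite {1}s0; apply: Lab_path => //; by rewrite add0n.
- rewrite -(prednK d0) last_map_iota prednK // add1n prednK //.
  by rewrite (Lab_topk s false d0 hk).
- rewrite {1}s0; change (uniq [seq Lab s cs false k j | j <- iota 0 (size cs).+1]).
  exact: uniq_Lab_iota.
Qed.

Lemma cyc_mem m (s : vert m.+1) (cs : seq 'I_m.+1) k x : (k < size cs)%coq_nat -> x \in s :: cyc s cs k ->
  x = s \/ x = Lab s cs false 0 (size cs) \/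
  exists j, ((0 < j)%coq_nat /\ (j < size cs)%coq_nat) /\ x = Lab s cs false k j.
Proof.
move=> /ltP hk; rewrite in_cons => /orP [/eqP ->|/in_map_iota [j /andP [h1 h2] ->]]; first by left.
right; rewrite add1n ltnS leq_eqVlt in h2; case/orP: h2 => [/eqP ->|h2].
  by left; apply: Lab_topk => //; apply: leq_ltn_trans hk.
by right; exists j; split => //; split; apply/ltP.
Qed.

Lemma cyc_disj m (o : orientation m.+1) (C : {set 'I_m.+1}) (s : vert m.+1) (cs : seq 'I_m.+1) k k' x : @Ctx m o C s cs -> (k < k')%coq_nat /\ (k' < size cs)%coq_nat ->
  x \in s :: cyc s cs k -> x \in s :: cyc s cs k' ->
  x = s \/ x = Lab s cs false 0 (size cs).
Proof.
move=> [Hu HN _ _] hk H1 H2.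
case: (@cyc_mem _ s cs k x ltac:(lia) H1) => [|[|[j [hj E1]]]]; try tauto.
case: (@cyc_mem _ s cs k' x ltac:(lia) H2) => [|[|[j' [hj' E2]]]]; try tauto.
rewrite E1 in E2. have h1 : (k < size cs)%coq_nat by lia. have h2 : (k' < size cs)%coq_nat by lia. have h3 : (j <= size cs)%coq_nat by lia. have h4 : (j' <= size cs)%coq_nat by lia. have := @Lab_eqQ _ s cs false k j false k' j' Hu HN h1 h2 h3 h4 E2. move=> [_ HH]; exfalso; lia.
Qed.

Lemma cyc_head m (s : vert m.+1) (cs : seq 'I_m.+1) k : 0 < size cs -> nth s (cyc s cs k) 0 = Lab s cs false k 1.
Proof. by move=> h; rewrite /cyc (nth_map 0) ?size_iota // nth_iota. Qed.

Lemma cyc_inj m (s : vert m.+1) (cs : seq 'I_m.+1) k k' : uniq cs -> ord_max \notin cs ->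
  (k < size cs)%coq_nat -> (k' < size cs)%coq_nat -> cyc s cs k = cyc s cs k' -> k = k'.
Proof.
move=> Hu HN hk hk' E.
have d0 : 0 < size cs by apply/ltP; lia.
move: (congr1 (fun q => nth s q 0) E); rewrite !cyc_head // => E'.
have := @Lab_eqQ _ s cs false k 1 false k' 1 Hu HN hk hk' ltac:(lia) ltac:(lia) E'; lia.
Qed.

Lemma HK_cyc0 m (o : orientation m.+1) (C : {set 'I_m.+1}) (s : vert m.+1) (cs : seq 'I_m.+1) t : @Ctx m o C s cs -> #|C| = size cs ->
  t = Lab s cs false 0 (size cs) -> HKgoal o C s t.
Proof.
move=> X hC ht; have [Hu HN _ _] := X.
exists [seq cyc s cs k | k <- iota 0 (size cs)]; split.
- by rewrite size_map size_iota.
- rewrite map_inj_in_uniq ?iota_uniq // => k k'; rewrite !mem_iota !add0n => /ltP h1 /ltP h2.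
  exact: cyc_inj.
- move=> q /in_map_iota [k /andP [_ h] ->]; apply: cyc_dpath => //.
- move=> a b; rewrite size_map size_iota => /andP [hab hb] x.
  rewrite !(nth_map 0) ?size_iota ?(ltn_trans hab) // !nth_iota ?(ltn_trans hab) // !add0n => H1 H2.
  rewrite ht; apply: (cyc_disj X _ H1 H2).
  move/ltP: hab; move/ltP: hb; lia.
Qed.


Lemma Lab_neqb m (s : vert m.+1) (cs : seq 'I_m.+1) k j k' j' :
  Lab s cs true k j != Lab s cs false k' j'.
Proof.
apply/eqP => /(congr1 (fun u : vert m.+1 => u ord_max)); rewrite !ffunE eqxx.
by case: (s _).
Qed.

Lemma HK_cycE m (o : orientation m.+1) (C : {set 'I_m.+1}) (s : vert m.+1) (cs : seq 'I_m.+1) t :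
  Ctx o C s cs -> ord_max \in C -> #|C| = (size cs).+1 -> 0 < size cs ->
  t = Lab s cs false 0 (size cs) -> o s ord_max -> o (Lab s cs true 0 (size cs)) ord_max ->
  HKgoal o C s t.
Proof.
move=> X NC hC d0 ht os ol; have [Hu HN _ _] := X.
have s0 : s = Lab s cs false 0 0 by rewrite Lab0.
pose E := [seq Lab s cs true 0 j | j <- iota 0 (size cs).+1] ++ [:: t].
have memE : forall x, x \in s :: E -> x = s \/ x = t \/ exists j, x = Lab s cs true 0 j.
  move=> x; rewrite in_cons mem_cat mem_seq1 => /orP [/eqP->|/orP [/in_map_iota [j _ ->]|/eqP ->]].
  - by left.
  - by right; right; exists j.
  - by right; left.
exists (E :: [seq cyc s cs k | k <- iota 0 (size cs)]); split.
- by rewrite /= size_map size_iota hC.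
- rewrite /= map_inj_in_uniq ?iota_uniq; last first.
    move=> k k'; rewrite !mem_iota !add0n => /ltP h1 /ltP h2; exact: cyc_inj.
  rewrite andbT; apply/mapP => [[k _ EE]].
  move: (congr1 (fun q => nth s q 0) EE); rewrite cyc_head //= => EE'.
  by move: (Lab_neqb s cs 0 0 k 1); rewrite EE' eqxx.
- move=> q; rewrite in_cons => /orP [/eqP ->|/in_map_iota [k /andP [_ hk] ->]]; last first.
    by apply: cyc_dpath.
  rewrite /dpath; apply/and3P; split.
  + rewrite cat_path; apply/andP; split.
      rewrite /= {1}s0; apply/andP; split.
        by rewrite -[Lab s cs true 0 0]/(Lab s cs (~~ false) 0 0) -Lab_flipN; apply: dedge_N => //; rewrite -s0.
      by apply: Lab_path => //.
    rewrite last_map_iota add0n /= andbT ht.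
    by rewrite -[Lab s cs false 0 (size cs)]/(Lab s cs (~~ true) 0 (size cs)) -Lab_flipN; apply: dedge_N.
  + by rewrite last_cat.
  + rewrite cons_uniq mem_cat mem_seq1 negb_or cat_uniq uniq_Lab_iota // has_seq1 andbT -andbA.
    apply/and3P; split.
    * apply/mapP => [[j _ EE]]; by move: (Lab_neqb s cs 0 j 0 0); rewrite -EE -s0 eqxx.
    * rewrite ht {1}s0; apply/eqP => EE.
      have := @Lab_eqQ _ s cs false 0 0 false 0 (size cs) Hu HN ltac:(by apply/ltP) ltac:(by apply/ltP) ltac:(lia) ltac:(lia) EE.
      move/ltP: d0; lia.
    * apply/mapP => [[j _ EE]]; by move: (Lab_neqb s cs 0 j 0 (size cs)); rewrite -EE ht eqxx.
- move=> a b; rewrite /= size_map size_iota => /andP [hab hb] x.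
  case: b hab hb => [|b] // hab hb.
  rewrite /= (nth_map 0) ?size_iota // nth_iota // add0n => H1 H2.
  case: a hab H1 => [|a] hab H1.
    case: (memE x H1) => [|[|[j Ej]]]; try tauto.
    case: (@cyc_mem _ s cs b x ltac:(apply/ltP; done) H2) => [->|[->|[j' [_ Ej']]]]; [by left|by right; rewrite ht|].
    by move: (Lab_neqb s cs 0 j b j'); rewrite -Ej -Ej' eqxx.
  have ha : a < size cs by rewrite !ltnS in hab hb; exact: ltn_trans hab hb.
  move: H1; rewrite /= (nth_map 0) ?size_iota // nth_iota // add0n => H1.
  rewrite ht; apply: (cyc_disj X _ H1 H2).
  move/ltP: hab; move/ltP: hb; lia.
Qed.

Lemma HK_d0 m (o : orientation m.+1) (C : {set 'I_m.+1}) (s t : vert m.+1) :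
  ord_max \in C -> #|C| = 1 -> o s ord_max -> t = flip s ord_max -> HKgoal o C s t.
Proof.
move=> NC hC os ht; exists [:: [:: t]]; split => //.
- move=> q; rewrite mem_seq1 => /eqP ->; rewrite /dpath /= eqxx andbT.
  rewrite ht; apply/andP; split; first exact: dedge_N.
  rewrite andbT mem_seq1; apply/eqP => /(congr1 (fun u : vert m.+1 => u ord_max)).
  by rewrite flipE eqxx; case: (s _).
- move=> a [|b] /andP [h1 h2]; [by rewrite ltn0 in h1 | by rewrite /= ltnS ltn0 in h2].
Qed.

Lemma in_iota1 d k : k \in iota 1 d.-1 -> (0 < k)%coq_nat /\ (k < d)%coq_nat.
Proof. rewrite mem_iota => /andP [/leP h1 /ltP h2]; rewrite -?plusE in h2; lia. Qed.

Ltac finish_lab Hu HN E1 E2 :=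
  rewrite E1 in E2; exfalso;
  match type of E2 with @Lab _ ?s ?cs ?b ?k ?j = @Lab _ _ _ ?b' ?k' ?j' =>
    let H := fresh in
    have H := @Lab_eqQ _ s cs b k j b' k' j' Hu HN ltac:(lia) ltac:(lia) ltac:(lia) ltac:(lia) E2;
    case: H => [? [? ?]]; try discriminate; lia end.

Lemma HK_a m (o : orientation m.+1) (C : {set 'I_m.+1}) (s : vert m.+1) (cs : seq 'I_m.+1) t
  (jf : nat -> nat) :
  Ctx o C s cs -> ord_max \in C -> #|C| = (size cs).+1 -> 0 < size cs ->
  t = Lab s cs true 0 (size cs) -> o s ord_max -> o (Lab s cs false 0 (size cs)) ord_max ->
  (forall k, (0 < k)%coq_nat -> (k < size cs)%coq_nat ->
     [/\ (0 < jf k)%coq_nat, (jf k < size cs)%coq_nat & o (Lab s cs false k (jf k)) ord_max]) ->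
  HKgoal o C s t.
Proof.
move=> X NC hC d0 ht os ol Hjf; have [Hu HN _ _] := X.
have d0' : (0 < size cs)%coq_nat by apply/ltP.
have s0 : forall k, k <= size cs -> s = Lab s cs false k 0 by move=> k hk; rewrite Lab0.
pose A := [seq Lab s cs true 0 j | j <- iota 0 (size cs).+1].
pose B := [seq Lab s cs false 0 j | j <- iota 1 (size cs)] ++ [:: t].
pose M k := [seq Lab s cs false k j | j <- iota 1 (jf k)] ++
            [seq Lab s cs true k j | j <- iota (jf k) (size cs - jf k).+1].
have memA : forall x, x \in s :: A -> x = s \/ x = t \/
    exists j, (j < size cs)%coq_nat /\ x = Lab s cs true 0 j.
  move=> x; rewrite in_cons => /orP [/eqP->|/in_map_iota [j /andP [_ h] ->]]; first by left.
  rewrite add0n ltnS leq_eqVlt in h; case/orP: h => [/eqP ->|/ltP h]; first by right; left.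
  by right; right; exists j.
have memB : forall x, x \in s :: B -> x = s \/ x = t \/
    exists j, (j <= size cs)%coq_nat /\ x = Lab s cs false 0 j.
  move=> x; rewrite in_cons mem_cat mem_seq1 => /orP [/eqP->|/orP [/in_map_iota [j /andP [_ h] ->]|/eqP ->]].
  - by left.
  - right; right; exists j; split => //; apply/leP; by rewrite -ltnS -(add1n (size cs)).
  - by right; left.
have memM : forall k x, (0 < k)%coq_nat -> (k < size cs)%coq_nat -> x \in s :: M k ->
    x = s \/ x = t \/
    (exists j, [/\ (0 < j)%coq_nat, (j <= jf k)%coq_nat & x = Lab s cs false k j]) \/
    (exists j, [/\ (jf k <= j)%coq_nat, (j < size cs)%coq_nat & x = Lab s cs true k j]).
  move=> k x hk1 hk2; have [hj1 hj2 _] := Hjf k hk1 hk2.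
  rewrite in_cons mem_cat => /orP [/eqP->|/orP [/in_map_iota [j /andP [h1 h2] ->]|/in_map_iota [j /andP [h1 h2] ->]]].
  - by left.
  - right; right; left; exists j; split => //; first by apply/ltP.
    by apply/leP; rewrite -ltnS -(add1n (jf k)).
  - move/leP: h1 => h1; move/ltP: h2; rewrite -plusE -minusE => h2.
    case: (PeanoNat.Nat.eq_dec j (size cs)) => [ej|nj].
      right; left; rewrite ht ej; apply: Lab_topk; apply/ltP; lia.
    right; right; right; exists j; split => //; lia.
have hM : forall k, (0 < jf k)%coq_nat -> nth s (M k) 0 = Lab s cs false k 1.
  move=> k h; rewrite nth_cat size_map size_iota.
  have -> : 0 < jf k by apply/ltP.
  by rewrite (nth_map 0) ?size_iota ?nth_iota //; apply/ltP.
have hB : nth s B 0 = Lab s cs false 0 1.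
  by rewrite nth_cat size_map size_iota d0 (nth_map 0) ?size_iota ?nth_iota.
exists (A :: B :: [seq M k | k <- iota 1 (size cs).-1]); split.
- by rewrite /= size_map size_iota hC prednK.
- rewrite /=; apply/andP; split; [|apply/andP; split].
  + rewrite in_cons negb_or; apply/andP; split.
      apply/eqP => EE; move: (congr1 (fun q => nth s q 0) EE); rewrite hB /= => EE'.
      by move: (Lab_neqb s cs 0 0 0 1); rewrite EE' eqxx.
    apply/mapP => [[k hk EE]]; have [h1 h2] := in_iota1 hk; have [hj _ _] := Hjf k h1 h2.
    move: (congr1 (fun q => nth s q 0) EE); rewrite hM //= => EE'.
    by move: (Lab_neqb s cs 0 0 k 1); rewrite EE' eqxx.
  + apply/mapP => [[k hk EE]]; have [h1 h2] := in_iota1 hk; have [hj _ _] := Hjf k h1 h2.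
    move: (congr1 (fun q => nth s q 0) EE); rewrite hB hM // => EE'.
    have := @Lab_eqQ _ s cs false 0 1 false k 1 Hu HN ltac:(lia) ltac:(lia) ltac:(lia) ltac:(lia) EE'; lia.
  + rewrite map_inj_in_uniq ?iota_uniq // => k k' hk hk' EE.
    have [h1 h2] := in_iota1 hk; have [hj _ _] := Hjf k h1 h2.
    have [h1' h2'] := in_iota1 hk'; have [hj' _ _] := Hjf k' h1' h2'.
    move: (congr1 (fun q => nth s q 0) EE); rewrite !hM // => EE'.
    have := @Lab_eqQ _ s cs false k 1 false k' 1 Hu HN ltac:(lia) ltac:(lia) ltac:(lia) ltac:(lia) EE'; lia.
- move=> q; rewrite !in_cons => /orP [/eqP ->|/orP [/eqP ->|/mapP [k hk ->]]].
  + rewrite /dpath; apply/and3P; split.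
    * rewrite /A /= {1}(s0 0) //; apply/andP; split.
        by rewrite -[Lab s cs true 0 0]/(Lab s cs (~~ false) 0 0) -Lab_flipN -(s0 0) //; apply: dedge_N.
      by apply: Lab_path.
    * by rewrite last_map_iota add0n ht.
    * rewrite cons_uniq uniq_Lab_iota // andbT; apply/mapP => [[j _ EE]].
      by move: (Lab_neqb s cs 0 j 0 0); rewrite -EE -(s0 0) // eqxx.
  + rewrite /dpath; apply/and3P; split.
    * rewrite cat_path; apply/andP; split.
        by rewrite {1}(s0 0) //; exact: Lab_path.
      rewrite -(prednK d0) last_map_iota add1n prednK // /= andbT ht.
      by rewrite -[Lab s cs true 0 _]/(Lab s cs (~~ false) 0 _) -Lab_flipN; apply: dedge_N.
    * by rewrite last_cat.
    * rewrite {1}(s0 0) //.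
      change (uniq ([seq Lab s cs false 0 j | j <- iota 0 (size cs).+1] ++ [:: t])).
      rewrite cat_uniq uniq_Lab_iota // has_seq1 [uniq [:: t]]/= andbT.
      apply/mapP => [[j _ EE]].
      by move: (Lab_neqb s cs 0 (size cs) 0 j); rewrite -ht EE eqxx.
  + have [h1 h2] := in_iota1 hk; have [hj1 hj2 hjo] := Hjf k h1 h2.
    have hj0 : 0 < jf k by apply/ltP.
    have hkb : k < size cs by apply/ltP.
    have hkb' : k <= size cs by apply/leP; lia.
    have hu1 : 0 + (jf k).+1 <= (size cs).+1 by apply/leP; rewrite -?plusE; lia.
    have hu2 : jf k + (size cs - jf k).+1 <= (size cs).+1 by apply/leP; rewrite -?plusE -?minusE; lia.
    have hu3 : jf k + (size cs - jf k) <= size cs by apply/leP; rewrite -?plusE -?minusE; lia.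
    have hu4 : 0 + jf k <= size cs by apply/leP; rewrite -?plusE; lia.
    rewrite /dpath; apply/and3P; split.
    * rewrite cat_path; apply/andP; split.
        by rewrite {1}(s0 k) //; apply: Lab_path.
      rewrite -(prednK hj0) last_map_iota prednK // add1n prednK //=.
      apply/andP; split.
        by rewrite -[Lab s cs true k _]/(Lab s cs (~~ false) k _) -Lab_flipN; apply: dedge_N.
      by apply: Lab_path.
    * rewrite last_cat last_map_iota subnKC ?ht; last by apply/leP; lia.
      by apply/eqP; apply: Lab_topk.
    * rewrite {1}(s0 k) //.
      change (uniq ([seq Lab s cs false k j | j <- iota 0 (jf k).+1] ++
                    [seq Lab s cs true k j | j <- iota (jf k) (size cs - jf k).+1])).
      rewrite cat_uniq !uniq_Lab_iota // andbT andTb.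
      apply/hasPn => x /in_map_iota [j _ ->]; apply/mapP => [[j' _ EE]].
      by move: (Lab_neqb s cs k j k j'); rewrite EE eqxx.
- move=> a b; rewrite /= size_map size_iota prednK // => /andP [hab hb] x.
  move/ltP: hab => hab; move/ltP: hb => hb.
  case: a b hab hb => [|[|a]] [|[|b]] hab hb; try (exfalso; lia).
  + move=> /memA HA /memB HB'.
    case: HA => [->|[->|[j [hj E1]]]]; [by left|by right|].
    case: HB' => [->|[->|[j' [hj' E2]]]]; [by left|by right|].
    finish_lab Hu HN E1 E2.
  + have hk1 : (0 < b.+1)%coq_nat by lia.
    have hk2 : (b.+1 < size cs)%coq_nat by lia.
    have [hj1 hj2 _] := Hjf _ hk1 hk2.
    rewrite /= (nth_map 0) ?size_iota ?nth_iota ?add1n; try (apply/ltP; lia).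
    move=> /memA HA /(memM _ _ hk1 hk2) HB'.
    case: HA => [->|[->|[j [hj E1]]]]; [by left|by right|].
    case: HB' => [->|[->|[[j' [? ? E2]]|[j' [? ? E2]]]]]; [by left|by right| |].
      finish_lab Hu HN E1 E2.
    finish_lab Hu HN E1 E2.
  + have hk1 : (0 < b.+1)%coq_nat by lia.
    have hk2 : (b.+1 < size cs)%coq_nat by lia.
    have [hj1 hj2 _] := Hjf _ hk1 hk2.
    rewrite /= (nth_map 0) ?size_iota ?nth_iota ?add1n; try (apply/ltP; lia).
    move=> /memB HA /(memM _ _ hk1 hk2) HB'.
    case: HA => [->|[->|[j [hj E1]]]]; [by left|by right|].
    case: HB' => [->|[->|[[j' [? ? E2]]|[j' [? ? E2]]]]]; [by left|by right| |].
      finish_lab Hu HN E1 E2.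
    finish_lab Hu HN E1 E2.
  + have hk1 : (0 < b.+1)%coq_nat by lia.
    have hk2 : (b.+1 < size cs)%coq_nat by lia.
    have [hj1 hj2 _] := Hjf _ hk1 hk2.
    have ha1 : (0 < a.+1)%coq_nat by lia.
    have ha2 : (a.+1 < size cs)%coq_nat by lia.
    have [hi1 hi2 _] := Hjf _ ha1 ha2.
    rewrite /= !(nth_map 0) ?size_iota ?nth_iota ?add1n; try (apply/ltP; lia).
    move=> /(memM _ _ ha1 ha2) HA /(memM _ _ hk1 hk2) HB'.
    case: HA => [->|[->|[[j [? ? E1]]|[j [? ? E1]]]]]; [by left|by right| |];
    (case: HB' => [->|[->|[[j' [? ? E2]]|[j' [? ? E2]]]]]; [by left|by right| |]);
      finish_lab Hu HN E1 E2.
Qed.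


Lemma mono_agree m (f : {ffun 'I_m -> bool} -> bool) (x y : {ffun 'I_m -> bool}) (al : bool) : monotone f ->
  f x = al -> (forall i, y i != al -> y i = x i) -> f y = al.
Proof.
move=> Hf fx H; case: al fx H => fx H.
  have : f x <= f y.
    apply: Hf => i; case E: (y i); first by case: (x i).
    by rewrite -(H i) ?E.
  by rewrite fx; case: (f y).
have : f y <= f x.
  apply: Hf => i; case E: (y i); last by [].
  by rewrite -(H i) ?E.
by rewrite fx; case: (f y).
Qed.

Lemma bneq (a b : bool) : b != a -> ~~ b != a -> False.
Proof. by case: a; case: b. Qed.

Lemma Lab_top0 m (s : vert m.+1) (cs : seq 'I_m.+1) b : Lab s cs b 0 (size cs) =
  [ffun x => if x == ord_max then s ord_max (+) b else if x \in cs then ~~ s x else s x].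
Proof.
apply/ffunP => x; rewrite !ffunE; case: (boolP (x \in cs)) => xc //=.
have hi : index x cs < size cs by rewrite index_mem.
by rewrite memd // (leq_ltn_trans (leq0n _) hi).
Qed.

Lemma Phi_SHK m f : monotone f -> strongly_holt_klee (@Phi m f).
Proof.
move=> Hf F v C s t.
set o := reorient (Phi f) F.
move=> Hs Ht; change (HKgoal o C s t).
have oE : forall u i, i != ord_max -> o u i = (u i == (i \in F)).
  by move=> u i iN; rewrite /o /reorient /Phi (negbTE iN); case: (i \in F); case: (u i).
have oN : forall u, o u ord_max = u ord_max (+) (f (vprefix u) (+) (ord_max \in F)).
  by move=> u; rewrite /o /reorient /Phi eqxx; case: (_ \in F); case: (u _); case: (f _).
case/andP: Hs => /subcubeP Hs1 /forallP Hs2.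
case/andP: Ht => /subcubeP Ht1 /forallP Ht2.
have sD : forall i, i \in C -> i != ord_max -> s i = (i \in F).
  by move=> i iC iN; move: (Hs2 i); rewrite iC oE //= => /eqP.
have tD : forall i, i \in C -> i != ord_max -> t i = ~~ (i \in F).
  by move=> i iC iN; move: (Ht2 i); rewrite iC oE //=; case: (t i); case: (i \in F).
set D := C :\ ord_max.
set al := f (vprefix s).
pose p := fun x : 'I_m.+1 => s x != al.
pose cs1 := filter (predC p) (enum D).
pose cs := cs1 ++ filter p (enum D).
have hcs : forall x, (x \in cs) = (x \in C) && (x != ord_max).
  move=> x; rewrite mem_cat (mem_filter (predC p)) (mem_filter p) !mem_enum in_setD1 /=.
  by case: (p x); rewrite /= ?orbF // andbC.
have Hu : uniq cs.
  have ue : uniq (enum D) := enum_uniq _.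
  rewrite cat_uniq (filter_uniq (predC p) ue) (filter_uniq p ue) andbT /=.
  apply/hasPn => x; rewrite (mem_filter p) (mem_filter (predC p)) /= => /andP [px _]; by rewrite px.
have HN : ord_max \notin cs by rewrite hcs eqxx andbF.
have hC : #|C| = (ord_max \in C) + size cs.
  rewrite (cardsD1 ord_max C) size_cat (size_filter (predC p)) (size_filter p) [count (predC p) _ + _]addnC count_predC cardE //.
have X : Ctx o C s cs.
  split => //; first by move=> x; rewrite hcs => /andP [].
  move=> x u; rewrite hcs => /andP [xC xN]; by rewrite oE // sD.
have toff : forall x, x != ord_max -> t x = if x \in cs then ~~ s x else s x.
  move=> x xN; rewrite hcs xN andbT; case: (boolP (x \in C)) => xC.
    by rewrite tD // sD.
  by rewrite Ht1 // Hs1.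
have tLab : forall b, t ord_max = s ord_max (+) b -> t = Lab s cs b 0 (size cs).
  move=> b htb; rewrite Lab_top0; apply/ffunP => x; rewrite ffunE.
  case: (eqVneq x ord_max) => [->|xN] //; exact: toff.
case NCe: (ord_max \in C); last first.
  have NC : ord_max \notin C by rewrite NCe.
  apply: (HK_cyc0 (t:=t) X); first by rewrite hC (negbTE NC) add0n.
  apply: tLab; by rewrite Ht1 // Hs1 // addbF.
have NC : ord_max \in C by rewrite NCe.
have hsO : o s ord_max by move: (Hs2 ord_max); rewrite NC.
have hsN := Hs2 ord_max; rewrite NC /= oN in hsN.
have htN := Ht2 ord_max; rewrite NC /= oN in htN.
have pret : forall b k, k < size cs -> vprefix (Lab s cs b k (size cs)) = vprefix t.
  move=> b k hk; apply/ffunP => i; rewrite [LHS]ffunE [RHS]ffunE Lab_top // ffunE (negbTE (widen_neq i)).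
  by rewrite toff // widen_neq.
case: (posnP (size cs)) => d0.
  have xc0 : forall x, (x \in cs) = false by move=> x; rewrite (size0nil d0).
  have pts : vprefix t = vprefix s.
    by apply/ffunP => i; rewrite !ffunE toff ?widen_neq // xc0.
  apply: HK_d0 => //; first by rewrite hC d0 NC.
  apply/ffunP => x; rewrite flipE; case: (eqVneq x ord_max) => [->|xN].
    by move: hsN htN; rewrite pts; case: (t _); case: (s _); case: (f _); case: (_ \in F).
  by rewrite toff // xc0.
case: (eqVneq (f (vprefix s)) (f (vprefix t))) => Eft.
  have htb : t ord_max = s ord_max (+) true.
    by move: hsN htN; rewrite -Eft; case: (t _); case: (s _); case: (f _); case: (_ \in F).
  have ht := tLab _ htb.
  pose r := size cs1.
  have nthp : forall e, e < size cs -> p (nth ord_max cs e) = (r <= e).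
    move=> e he; rewrite nth_cat -/cs1 -/r; case: ltnP => her.
      have : nth ord_max cs1 e \in cs1 by apply: mem_nth.
      by rewrite mem_filter /= => /andP [/negbTE].
    have : nth ord_max (filter p (enum D)) (e - r) \in filter p (enum D).
      apply: mem_nth; rewrite -(ltn_add2l r) subnKC //.
      by move: he; rewrite size_cat.
    by rewrite mem_filter => /andP [].
  apply: (@HK_a _ o C s cs t (fun k => if r <= k then 1 else (size cs).-1)) => //.
  - by rewrite hC NC.
  - rewrite oN (vprefix_Lab _ _ _ true) pret // ffunE eqxx addbF -Eft.
    by move: hsN; rewrite /al.
  - move=> k hk1 hk2.
    have hk2b : k < size cs by apply/ltP.
    have d2 : (1 < size cs)%coq_nat by lia.
    set j0 := (if r <= k then 1 else (size cs).-1).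
    have hj0 : (0 < j0)%coq_nat /\ (j0 < size cs)%coq_nat.
      by rewrite /j0; case: ifP => _; lia.
    case: hj0 => hj1 hj2; split => //.
    have fl : f (vprefix (Lab s cs false k j0)) = al.
      rewrite /j0; case: ifP => hrk.
        apply: (@mono_agree _ f (vprefix s)) => // i; rewrite !ffunE (negbTE (widen_neq i)).
        case: (boolP (widen_ord (leqnSn m) i \in cs)) => xc //=.
        rewrite mem1 ?index_mem //.
        case: (eqVneq (index (widen_ord (leqnSn m) i) cs) k) => Ei; last by [].
        have := nthp k hk2b; rewrite hrk -Ei nth_index // /p => H1 H2.
        by case: (bneq H1 H2).
      have hkd : k.-1 < size cs by apply/ltP; lia.
      apply: (@mono_agree _ f (vprefix t)); first by [].
        by rewrite -Eft.
      move=> i; rewrite !ffunE (negbTE (widen_neq i)) toff ?widen_neq //.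
      case: (boolP (widen_ord (leqnSn m) i \in cs)) => xc //=.
      rewrite memdm1 ?index_mem //; try (apply/ltP; lia).
      case: (eqVneq (index (widen_ord (leqnSn m) i) cs) k.-1) => Ei /=; last by [].
      have := nthp k.-1 hkd.
      have -> : (r <= k.-1) = false.
        by apply/negbTE; rewrite -ltnNge; apply/ltP; move/negbT: hrk; rewrite -ltnNge => /ltP; lia.
      rewrite -Ei nth_index // /p => H1 H2; by rewrite H1 in H2.
    rewrite oN fl ffunE eqxx addbF.
    by move: hsN; rewrite /al.
have htb : t ord_max = s ord_max (+) false.
  by move: hsN htN Eft; case: (t _); case: (s _); case: (f (vprefix s)); case: (f (vprefix t)); case: (_ \in F).
have ht := tLab _ htb.
apply: (@HK_cycE _ o C s cs t X NC _ d0 ht hsO).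
- by rewrite hC NC.
- rewrite oN pret // ffunE eqxx.
  by move: hsN htN Eft; case: (t _); case: (s _); case: (f (vprefix s)); case: (f (vprefix t)); case: (_ \in F).
Qed.


Unset Implicit Arguments.

Theorem mainTheorem3 (m : nat) (Hm : 1 <= m) :
  (forall f : {ffun 'I_m -> bool} -> bool, monotone f ->
     [/\ is_USO (Phi f), acyclic (Phi f), locally_uniform (Phi f)
       & strongly_holt_klee (Phi f)]) /\
  (forall f g : {ffun 'I_m -> bool} -> bool, monotone f -> monotone g ->
     (exists x, f x != g x) -> exists v i, Phi f v i != Phi g v i).
Proof.
split.
- move=> f Hf; split; [exact: Phi_USO | exact: Phi_acyclic | exact: Phi_LU | exact: Phi_SHK].
- move=> f g _ _; exact: Phi_distinct.
Qed.
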